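(* Let $\alpha\neq0$ and $b<0$, consider the system $\dot x=u\alpha x$, $\dot y=by+ux$ on $G$, and let $\mathcal C=\bigcup_{u\in B}r_u$. Then: 1. If $b\notin\alpha\Omega=\{\alpha u:u\in\Omega\}$, then $\mathcal C=\{(x,y)\in G: m_{u_*}x\le y\le m_{u^*}x\}$. 2. If $b\in\alpha\Omega$, then $\mathcal C=\{(x,y)\in G: y\le m_{u^*}x\}$ when $\alpha>0$, and $\mathcal C=\{(x,y)\in G: y\ge m_{u_*}x\}$ when $\alpha<0$. 3. For any $u_1,u_2$ in the interior (in $\mathbb{R}$) of $B$ with $u_1\neq u_2$, there exist $t_0>0$ and $u\in\Omega$ such that $\varphi(t_0,r_{u_1},u)=r_{u_2}$. 4. $\mathcal C$ is positively invariant: $\varphi(t,p,u)\in\mathcal C$ for all $p\in\mathcal C$, $t\ge0$ and $u\in\mathcal U$.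
   Context: Let $G=\{(x,y)\in\mathbb{R}^2:x>0\}$. Fix $\Omega=[u_*,u^*]$ with $u_*<0<u^*$, and fix constants $\alpha\neq0$, $b<0$. The admissible controls $\mathcal U$ are the piecewise constant functions $\mathbb{R}\to\Omega$. Consider the system $\dot x=u\alpha x$, $\dot y=by+ux$ on $G$, with solutions $\varphi(t,p,u)$. For $u\in\mathbb{R}$ with $u\alpha\neq b$, set $m_u=\frac{u}{u\alpha-b}$ and define the ray $r_u=\{(x,y)\in G: y=m_ux\}$. Let $B=\{u\in\Omega: u\alpha-b>0\}$; this set is nonempty since $0\in B$. *)

(* Defs.v *)
From Stdlib Require Import Reals Lra List.
Open Scope R_scope.

Definition inG (x y : R) : Prop := 0 < x.

Definition m_ (alpha b u : R) : R := u / (u * alpha - b).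

Definition ray (alpha b u x y : R) : Prop := inG x y /\ y = m_ alpha b u * x.

Definition inOmega (uL uU u : R) : Prop := uL <= u <= uU.

Definition inB (uL uU alpha b u : R) : Prop := inOmega uL uU u /\ u * alpha - b > 0.

Definition inIntB (uL uU alpha b u : R) : Prop :=
  exists eps, eps > 0 /\ forall v, Rabs (v - u) < eps -> inB uL uU alpha b v.

Definition Cset (uL uU alpha b x y : R) : Prop :=
  exists u, inB uL uU alpha b u /\ ray alpha b u x y.

(* Admissible controls: piecewise constant functions R -> Omega, i.e. on every
   bounded interval [a,c] there are finitely many points outside of which u is
   constant on each remaining connected piece. *)
Definition piecewise_const (u : R -> R) : Prop :=
  forall a c, a < c -> exists pts : list R,
    forall s1 s2, a <= s1 -> s1 <= s2 -> s2 <= c ->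
      (forall p, In p pts -> ~ (s1 <= p <= s2)) -> u s1 = u s2.

Definition admissible (uL uU : R) (u : R -> R) : Prop :=
  (forall t, inOmega uL uU (u t)) /\ piecewise_const u.

(* (X, Y) is a solution of xdot = u alpha x, ydot = b y + u x for the control u:
   continuous everywhere, and satisfying the ODE at every time around which u
   is locally constant (i.e. everywhere except at the switching times). *)
Definition is_solution (alpha b : R) (u : R -> R) (X Y : R -> R) : Prop :=
  (forall t, continuity_pt X t /\ continuity_pt Y t) /\
  (forall t, (exists d, d > 0 /\ forall s, Rabs (s - t) < d -> u s = u t) ->
     derivable_pt_lim X t (u t * alpha * X t) /\
     derivable_pt_lim Y t (b * Y t + u t * X t)).

(* Main.v *)
Require Import Defs.
From Stdlib Require Import Reals Lra List.
Open Scope R_scope.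

Lemma D_exp k s : derivable_pt_lim (fun t => exp (k*t)) s (k * exp (k*s)).
Proof.
  assert (H1 : derivable_pt_lim (fun t => k*t) s k).
  { assert (H := derivable_pt_lim_scal id k s 1 (derivable_pt_lim_id s)).
    unfold mult_real_fct, id in H. rewrite Rmult_1_r in H. exact H. }
  assert (H := derivable_pt_lim_comp (fun t => k*t) exp s k (exp (k*s)) H1 (derivable_pt_lim_exp (k*s))).
  unfold comp in H. replace (k * exp (k*s)) with (exp (k*s) * k) by ring. exact H.
Qed.

Lemma D_mul f g s df dg : derivable_pt_lim f s df -> derivable_pt_lim g s dg ->
  derivable_pt_lim (fun t => f t * g t) s (df * g s + f s * dg).
Proof. intros Hf Hg. exact (derivable_pt_lim_mult f g s df dg Hf Hg). Qed.

Lemma D_lin f g c s df dg : derivable_pt_lim f s df -> derivable_pt_lim g s dg ->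
  derivable_pt_lim (fun t => f t - c * g t) s (df - c * dg).
Proof.
  intros Hf Hg.
  assert (H := derivable_pt_lim_scal g c s dg Hg).
  exact (derivable_pt_lim_minus f (mult_real_fct c g) s df (c*dg) Hf H).
Qed.

Lemma D_mulexp f k s d : derivable_pt_lim f s d ->
  derivable_pt_lim (fun t => f t * exp (k*t)) s ((d + k * f s) * exp (k*s)).
Proof.
  intro Hf. replace ((d + k * f s) * exp (k*s)) with (d * exp (k*s) + f s * (k * exp (k*s))) by ring.
  apply (D_mul f (fun t => exp (k*t))); [exact Hf | apply D_exp].
Qed.
Lemma mono_base (h df : R -> R) a c : a <= c ->
  (forall s, a <= s <= c -> continuity_pt h s) ->
  (forall s, a < s < c -> derivable_pt_lim h s (df s) /\ 0 <= df s) -> h a <= h c.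
Proof.
  intros Hac Hc Hd.
  destruct (Req_dec a c) as [->|Hne]; [lra|].
  assert (Hlt : a < c) by lra.
  pose (pr1 := fun s (P : a < s < c) => exist (fun l => derivable_pt_abs h s l) (df s) (proj1 (Hd s P))).
  pose (pr2 := fun s (P : a < s < c) => derivable_pt_id s).
  destruct (MVT h id a c pr1 pr2 Hlt Hc (fun s _ => derivable_continuous_pt id s (derivable_pt_id s))) as [s [P E]].
  rewrite (derive_pt_eq_0 h s (df s) (pr1 s P) (proj1 (Hd s P))) in E.
  rewrite (derive_pt_eq_0 id s 1 (pr2 s P) (derivable_pt_lim_id s)) in E.
  unfold id in E. destruct (Hd s P) as [_ Hp]. nra.
Qed.

Lemma mono_pts (h df : R -> R) (pts : list R) : forall a c, a <= c ->
  (forall s, a <= s <= c -> continuity_pt h s) ->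
  (forall s, a < s < c -> ~ In s pts -> derivable_pt_lim h s (df s) /\ 0 <= df s) ->
  h a <= h c.
Proof.
  induction pts as [|p pts IH]; intros a c Hac Hc Hd.
  - apply (mono_base h df); auto.
  - destruct (Rlt_dec a p) as [H1|H1]; [destruct (Rlt_dec p c) as [H2|H2]|].
    + apply Rle_trans with (h p).
      * apply IH; [lra| intros; apply Hc; lra |].
        intros s Hs Hn; apply Hd; [lra|]. intros [E|E]; [lra|tauto].
      * apply IH; [lra| intros; apply Hc; lra |].
        intros s Hs Hn; apply Hd; [lra|]. intros [E|E]; [lra|tauto].
    + apply IH; auto. intros s Hs Hn; apply Hd; auto. intros [E|E]; [lra|tauto].
    + apply IH; auto. intros s Hs Hn; apply Hd; auto. intros [E|E]; [lra|tauto].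
Qed.

Lemma cont_of_D h s d : derivable_pt_lim h s d -> continuity_pt h s.
Proof. intro H. exact (derivable_continuous_pt h s (exist _ d H)). Qed.

Lemma const_D (h : R -> R) a c : a <= c -> (forall s, derivable_pt_lim h s 0) -> h a = h c.
Proof.
  intros Hac Hd. apply Rle_antisym.
  - apply (mono_base h (fun _ => 0)); auto.
    + intros s _; exact (cont_of_D h s 0 (Hd s)).
    + intros s _; split; [apply Hd|lra].
  - assert (H : - h a <= - h c); [|lra].
    apply (mono_base (fun s => - h s) (fun _ => 0)); auto.
    + intros s _. apply (cont_of_D _ s (-0)). exact (derivable_pt_lim_opp h s 0 (Hd s)).
    + intros s _; split; [|lra]. replace 0 with (-0) by ring.
      exact (derivable_pt_lim_opp h s 0 (Hd s)).
Qed.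

Lemma D_eq f s d d' : derivable_pt_lim f s d -> d = d' -> derivable_pt_lim f s d'.
Proof. intros H ->; exact H. Qed.

Lemma flow_const alpha b v (X Y : R -> R) (Hk : v*alpha - b <> 0) :
  (forall t, derivable_pt_lim X t (v*alpha*X t) /\ derivable_pt_lim Y t (b*Y t + v*X t)) ->
  forall t, 0 <= t -> X t = X 0 * exp (v*alpha*t) /\
     Y t = m_ alpha b v * X t + (Y 0 - m_ alpha b v * X 0) * exp (b*t).
Proof.
  intros HD t Ht.
  set (m := m_ alpha b v).
  assert (Hm : m * (v*alpha - b) = v) by (unfold m, m_; field; exact Hk).
  assert (E1 := const_D (fun s => X s * exp (-(v*alpha)*s)) 0 t Ht).
  assert (E2 := const_D (fun s => (Y s - m * X s) * exp (-b*s)) 0 t Ht).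
  simpl in E1, E2.
  assert (Ex : X t = X 0 * exp (v*alpha*t)).
  { assert (E1' : X 0 * exp (-(v*alpha)*0) = X t * exp (-(v*alpha)*t)).
    { apply E1. intro s. destruct (HD s) as [HX _].
      eapply D_eq; [apply (D_mulexp X); exact HX| ring]. }
    replace (- (v * alpha) * 0) with 0 in E1' by ring. rewrite exp_0, Rmult_1_r in E1'.
    rewrite E1', Rmult_assoc, <- exp_plus. replace (- (v * alpha) * t + v * alpha * t) with 0 by ring.
    rewrite exp_0. ring. }
  split; [exact Ex|].
  assert (E2' : (Y 0 - m * X 0) * exp (-b*0) = (Y t - m * X t) * exp (-b*t)).
  { apply E2. intro s. destruct (HD s) as [HX HY].
    eapply D_eq; [apply (D_mulexp (fun s => Y s - m * X s)); apply D_lin; eassumption|].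
    - replace (((b*Y s + v*X s) - m * (v*alpha*X s) + -b * (Y s - m * X s)) * exp (-b*s))
        with (X s * (v - m * (v*alpha - b)) * exp (-b*s)) by ring.
      rewrite Hm. ring. }
  replace (-b*0) with 0 in E2' by ring. rewrite exp_0, Rmult_1_r in E2'.
  rewrite E2', Rmult_assoc, <- exp_plus. replace (-b*t + b*t) with 0 by ring. rewrite exp_0. ring.
Qed.
Lemma m_diff alpha b u v : b < 0 -> u*alpha - b > 0 -> v*alpha - b > 0 ->
  exists K, K > 0 /\ m_ alpha b v - m_ alpha b u = (v - u) * K.
Proof.
  intros Hb Hu Hv. exists (-b / ((u*alpha-b)*(v*alpha-b))). split.
  - apply Rdiv_lt_0_compat; [lra| apply Rmult_lt_0_compat; lra].
  - unfold m_. field. lra.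
Qed.

Lemma m_le alpha b u v : b < 0 -> u*alpha - b > 0 -> v*alpha - b > 0 ->
  (m_ alpha b u <= m_ alpha b v <-> u <= v).
Proof. intros Hb Hu Hv. destruct (m_diff alpha b u v Hb Hu Hv) as [K [HK E]]. split; intro; nra. Qed.

Lemma m_lt alpha b u v : b < 0 -> u*alpha - b > 0 -> v*alpha - b > 0 ->
  (m_ alpha b u < m_ alpha b v <-> u < v).
Proof. intros Hb Hu Hv. destruct (m_diff alpha b u v Hb Hu Hv) as [K [HK E]]. split; intro; nra. Qed.

Lemma one_m alpha b u : b < 0 -> u*alpha - b > 0 -> 1 - m_ alpha b u * alpha > 0.
Proof.
  intros Hb Hu. replace (1 - m_ alpha b u * alpha) with (-b / (u*alpha - b)).
  - apply Rdiv_lt_0_compat; lra.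
  - unfold m_. field. lra.
Qed.


Lemma D_add f g s df dg : derivable_pt_lim f s df -> derivable_pt_lim g s dg ->
  derivable_pt_lim (fun t => f t + g t) s (df + dg).
Proof. intros Hf Hg. exact (derivable_pt_lim_plus f g s df dg Hf Hg). Qed.

Lemma D_cmul f c s df : derivable_pt_lim f s df ->
  derivable_pt_lim (fun t => c * f t) s (c * df).
Proof. intros Hf. exact (derivable_pt_lim_scal f c s df Hf). Qed.

Lemma part3 uL uU alpha b (Hb : b < 0) u1 u2 :
  inIntB uL uU alpha b u1 -> inIntB uL uU alpha b u2 -> u1 <> u2 ->
     exists t0 u, t0 > 0 /\ inOmega uL uU u /\
       (forall x y X Y, ray alpha b u1 x y ->
          is_solution alpha b (fun _ => u) X Y -> X 0 = x -> Y 0 = y ->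
          ray alpha b u2 (X t0) (Y t0)) /\
       (forall x' y', ray alpha b u2 x' y' ->
          exists x y X Y, ray alpha b u1 x y /\
            is_solution alpha b (fun _ => u) X Y /\ X 0 = x /\ Y 0 = y /\
            X t0 = x' /\ Y t0 = y').
Proof.
  intros [e1 [He1 HB1]] [e2 [He2 HB2]] Hne.
  assert (B1 : inB uL uU alpha b u1) by (apply HB1; rewrite Rminus_diag, Rabs_R0; lra).
  assert (B2 : inB uL uU alpha b u2) by (apply HB2; rewrite Rminus_diag, Rabs_R0; lra).
  set (m1 := m_ alpha b u1). set (m2 := m_ alpha b u2).
  assert (Hv : exists v, inB uL uU alpha b v /\
     ((m1 < m2 < m_ alpha b v) \/ (m_ alpha b v < m2 < m1))).
  { destruct B1 as [_ K1]. destruct B2 as [_ K2].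
    destruct (Rlt_dec u1 u2) as [Hl|Hl].
    - exists (u2 + e2/2).
      assert (Bv : inB uL uU alpha b (u2 + e2/2)).
      { apply HB2. replace (u2 + e2/2 - u2) with (e2/2) by ring. rewrite Rabs_right; lra. }
      split; [exact Bv|]. left. destruct Bv as [_ Kv]. split.
      + apply m_lt; auto.
      + apply m_lt; auto; lra.
    - exists (u2 - e2/2).
      assert (Bv : inB uL uU alpha b (u2 - e2/2)).
      { apply HB2. replace (u2 - e2/2 - u2) with (-(e2/2)) by ring. rewrite Rabs_Ropp, Rabs_right; lra. }
      split; [exact Bv|]. right. destruct Bv as [_ Kv]. split.
      + apply m_lt; auto; lra.
      + apply m_lt; auto. lra. }
  destruct Hv as [v [[Ov Kv] Hord]].
  set (mv := m_ alpha b v).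
  fold mv in Hord.
  set (r := (m2 - mv) / (m1 - mv)).
  assert (Hden : m1 - mv <> 0) by lra.
  assert (Hr : r * (m1 - mv) = m2 - mv) by (unfold r; field; exact Hden).
  assert (Hr0 : 0 < r < 1) by (destruct Hord; split; nra).
  set (k := v*alpha - b).
  assert (Hk : k > 0) by exact Kv.
  set (t0 := - ln r / k).
  assert (Hln : ln r < 0) by (rewrite <- ln_1; apply ln_increasing; lra).
  assert (Ht0 : t0 > 0) by (unfold t0; apply Rdiv_lt_0_compat; lra).
  assert (Hexp : exp (b*t0) = exp (v*alpha*t0) * r).
  { rewrite <- (exp_ln r) by lra. rewrite <- exp_plus. f_equal.
    unfold t0, k in *. field. lra. }
  assert (Hm : mv * (v*alpha - b) = v) by (unfold mv, m_; field; lra).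
  exists t0, v. split; [exact Ht0|]. split; [exact Ov|]. split.
  - intros x y X Y [Hx Hy] [_ HD] HX0 HY0.
    assert (HD' : forall t, derivable_pt_lim X t (v*alpha*X t) /\ derivable_pt_lim Y t (b*Y t + v*X t)).
    { intro t. apply HD. exists 1. split; [lra|]. intros; reflexivity. }
    destruct (flow_const alpha b v X Y ltac:(lra) HD' t0 ltac:(lra)) as [EX EY].
    fold mv in EY. unfold inG in Hx.
    assert (PX : X t0 > 0) by (rewrite EX, HX0; apply Rmult_lt_0_compat; [lra| apply exp_pos]).
    split; [exact PX|]. rewrite EY, Hexp, HX0, HY0, Hy. fold m1 m2.
    rewrite EX, HX0. replace ((m1 * x - mv * x) * (exp (v * alpha * t0) * r))
      with (r * (m1 - mv) * (x * exp (v * alpha * t0))) by ring.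
    rewrite Hr. ring.
  - intros x' y' [Hx' Hy']. unfold inG in Hx'.
    set (x := x' * exp (-(v*alpha)*t0)).
    set (y := m1 * x).
    set (c := y - mv * x).
    set (X := fun s => x * exp (v*alpha*s)).
    set (Y := fun s => mv * X s + c * exp (b*s)).
    assert (DX : forall s, derivable_pt_lim X s (v*alpha*X s)).
    { intro s. eapply D_eq. apply (D_cmul (fun s => exp (v*alpha*s)) x). apply D_exp.
      unfold X; ring. }
    assert (DY : forall s, derivable_pt_lim Y s (b*Y s + v*X s)).
    { intro s. eapply D_eq. apply (D_add (fun s => mv * X s) (fun s => c * exp (b*s))).
      apply D_cmul. apply DX. apply D_cmul. apply D_exp.
      unfold Y. replace (v * X s) with (mv * (v*alpha - b) * X s) by (rewrite Hm; ring). ring. }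
    exists x, y, X, Y. split; [|split; [|split; [|split; [|split]]]].
    + split; [unfold inG, x; apply Rmult_lt_0_compat; [lra|apply exp_pos]|reflexivity].
    + split.
      * intro t. split; [exact (cont_of_D _ _ _ (DX t)) | exact (cont_of_D _ _ _ (DY t))].
      * intros t _. split; [apply DX|apply DY].
    + unfold X. rewrite Rmult_0_r, exp_0. ring.
    + unfold Y, X, c. rewrite Rmult_0_r, Rmult_0_r, exp_0. ring.
    + unfold X, x. rewrite Rmult_assoc, <- exp_plus.
      replace (- (v * alpha) * t0 + v * alpha * t0) with 0 by ring. rewrite exp_0. ring.
    + assert (EXt : X t0 = x').
      { unfold X, x. rewrite Rmult_assoc, <- exp_plus.
        replace (- (v * alpha) * t0 + v * alpha * t0) with 0 by ring. rewrite exp_0. ring. }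
      unfold Y. rewrite EXt, Hexp, Hy'. fold m2. unfold c, y.
      replace ((m1 * x - mv * x) * (exp (v * alpha * t0) * r))
        with (r * (m1 - mv) * (x * exp (v * alpha * t0))) by ring.
      rewrite Hr. fold (X t0). rewrite EXt. ring.
Qed.
Lemma char uL uU alpha b (HuL : uL < 0) (HuU : 0 < uU) (Halpha : alpha <> 0) (Hb : b < 0) x y :
  Cset uL uU alpha b x y <->
  (0 < x /\ (uL*alpha - b > 0 -> m_ alpha b uL * x <= y) /\ (uU*alpha - b > 0 -> y <= m_ alpha b uU * x)).
Proof.
  split.
  - intros [u [[[H1 H2] Hu] [Hx Hy]]]. unfold inG in Hx. split; [exact Hx|]. split.
    + intro HL. rewrite Hy. apply Rmult_le_compat_r; [lra|]. apply m_le; auto.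
    + intro HU. rewrite Hy. apply Rmult_le_compat_r; [lra|]. apply m_le; auto.
  - intros [Hx [HL HU]].
    set (c := y / x).
    assert (Hy : y = c * x) by (unfold c; field; lra).
    assert (Hc : 1 - c * alpha > 0).
    { destruct (Rlt_dec 0 alpha) as [Ha|Ha].
      - assert (P : uU*alpha - b > 0) by nra.
        specialize (HU P). pose proof (one_m alpha b uU Hb P).
        assert (c <= m_ alpha b uU) by nra. nra.
      - assert (Ha' : alpha < 0) by lra.
        assert (P : uL*alpha - b > 0) by nra.
        specialize (HL P). pose proof (one_m alpha b uL Hb P).
        assert (m_ alpha b uL <= c) by nra. nra. }
    set (u := - c * b / (1 - c*alpha)).
    assert (Hu : u*alpha - b = - b / (1 - c*alpha)) by (unfold u; field; lra).
    assert (Hu' : u*alpha - b > 0) by (rewrite Hu; apply Rdiv_lt_0_compat; lra).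
    assert (Hm : m_ alpha b u = c).
    { unfold m_. rewrite Hu. unfold u. field. split; lra. }
    exists u. split; [split; [split|]|]; auto.
    + destruct (Rlt_dec 0 (uL*alpha - b)) as [P|P].
      * apply (m_le alpha b uL u Hb P Hu'). rewrite Hm. specialize (HL P). nra.
      * assert (alpha > 0) by nra. nra.
    + destruct (Rlt_dec 0 (uU*alpha - b)) as [P|P].
      * apply (m_le alpha b u uU Hb Hu' P). rewrite Hm. specialize (HU P). nra.
      * assert (alpha < 0) by nra. nra.
    + split; [exact Hx|]. rewrite Hm. exact Hy.
Qed.
Lemma list_sep (l : list R) s : (forall p, In p l -> p <> s) ->
  exists d, d > 0 /\ forall p, In p l -> d <= Rabs (p - s).
Proof.
  induction l as [|q l IH]; intro H.
  - exists 1. split; [lra| intros p []].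
  - destruct IH as [d [Hd Hl]]. { intros p Hp. apply H. right; exact Hp. }
    assert (Hq : q <> s) by (apply H; left; reflexivity).
    assert (Hq' : Rabs (q - s) > 0) by (apply Rabs_pos_lt; lra).
    exists (Rmin d (Rabs (q - s))). split.
    + apply Rmin_glb_lt; lra.
    + intros p [<-|Hp].
      * apply Rmin_r.
      * apply Rle_trans with d; [apply Rmin_l| apply Hl; exact Hp].
Qed.

Lemma loc_const (u : R -> R) t pts :
  (forall s1 s2, 0 <= s1 -> s1 <= s2 -> s2 <= t ->
      (forall p, In p pts -> ~ (s1 <= p <= s2)) -> u s1 = u s2) ->
  forall s, 0 < s < t -> ~ In s pts ->
  exists d, d > 0 /\ forall s', Rabs (s' - s) < d -> u s' = u s.
Proof.
  intros Hpc s Hs Hn.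
  destruct (list_sep pts s) as [d0 [Hd0 Hl]].
  { intros p Hp E. subst. tauto. }
  exists (Rmin d0 (Rmin s (t - s))). split.
  { apply Rmin_glb_lt; [lra| apply Rmin_glb_lt; lra]. }
  intros s' Hs'.
  assert (A1 : Rabs (s' - s) < d0) by (eapply Rlt_le_trans; [exact Hs'| apply Rmin_l]).
  assert (A2 : Rabs (s' - s) < Rmin s (t - s)) by (eapply Rlt_le_trans; [exact Hs'| apply Rmin_r]).
  assert (A3 : Rabs (s' - s) < s) by (eapply Rlt_le_trans; [exact A2| apply Rmin_l]).
  assert (A4 : Rabs (s' - s) < t - s) by (eapply Rlt_le_trans; [exact A2| apply Rmin_r]).
  destruct (Rle_dec s' s) as [Hle|Hle].
  - rewrite Rabs_left1 in A1, A3, A4 by lra.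
    apply Hpc; try lra. intros p Hp Hin. specialize (Hl p Hp).
    destruct (Rle_dec p s) as [Q|Q].
    + rewrite Rabs_left1 in Hl by lra. lra.
    + rewrite Rabs_right in Hl by lra. lra.
  - rewrite Rabs_right in A1, A3, A4 by lra.
    symmetry. apply Hpc; try lra. intros p Hp Hin. specialize (Hl p Hp).
    destruct (Rle_dec p s) as [Q|Q].
    + rewrite Rabs_left1 in Hl by lra. lra.
    + rewrite Rabs_right in Hl by lra. lra.
Qed.

Lemma C_mul f g s : continuity_pt f s -> continuity_pt g s -> continuity_pt (fun t => f t * g t) s.
Proof. intros. exact (continuity_pt_mult f g s H H0). Qed.
Lemma C_minus f g s : continuity_pt f s -> continuity_pt g s -> continuity_pt (fun t => f t - g t) s.
Proof. intros. exact (continuity_pt_minus f g s H H0). Qed.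
Lemma C_cmul f c s : continuity_pt f s -> continuity_pt (fun t => c * f t) s.
Proof. intros. exact (continuity_pt_scal f c s H). Qed.
Lemma C_exp k s : continuity_pt (fun t => exp (k*t)) s.
Proof. exact (cont_of_D _ _ _ (D_exp k s)). Qed.

Lemma part4 uL uU alpha b (HuL : uL < 0) (HuU : 0 < uU) (Halpha : alpha <> 0) (Hb : b < 0) :
  forall u X Y, admissible uL uU u -> is_solution alpha b u X Y ->
     Cset uL uU alpha b (X 0) (Y 0) ->
     forall t, t >= 0 -> Cset uL uU alpha b (X t) (Y t).
Proof.
  intros u X Y [HOm Hpc] [HC HD] H0 t Ht.
  destruct (Req_dec t 0) as [->|Htn]; [exact H0|].
  assert (Htp : 0 < t) by lra.
  apply char in H0; auto. apply char; auto.
  destruct H0 as [HX0 [HL HU]].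
  destruct (Hpc 0 t Htp) as [pts Hpts].
  assert (HDer : forall s, 0 < s < t -> ~ In s pts ->
     derivable_pt_lim X s (u s * alpha * X s) /\ derivable_pt_lim Y s (b * Y s + u s * X s)).
  { intros s Hs Hn. apply HD. exact (loc_const u t pts Hpts s Hs Hn). }
  set (M := (- uL + uU) * Rabs alpha).
  assert (HM : forall v, inOmega uL uU v -> - M <= v * alpha <= M).
  { intros v [H1 H2]. unfold M. destruct (Rle_dec 0 alpha) as [Ha|Ha].
    - rewrite Rabs_right by lra. split; nra.
    - rewrite Rabs_left by lra. split; nra. }
  assert (Hnz : forall s, 0 <= s <= t -> X s <> 0).
  { intros s Hs.
    assert (Hm : X 0 * X 0 * exp (2*M*0) <= X s * X s * exp (2*M*s)).
    { apply (mono_pts (fun s => X s * X s * exp (2*M*s))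
        (fun s => ((u s * alpha * X s * X s + X s * (u s * alpha * X s)) + 2*M * (X s * X s)) * exp (2*M*s)) pts);
        [lra| |].
      - intros r Hr. apply (C_mul (fun s => X s * X s)); [apply (C_mul X X); apply HC | apply C_exp].
      - intros r Hr Hn. destruct (HDer r ltac:(lra) Hn) as [DX _]. split.
        + apply (D_mulexp (fun s => X s * X s)). apply (D_mul X X); exact DX.
        + apply Rmult_le_pos; [|left; apply exp_pos].
          destruct (HM (u r) (HOm r)). nra. }
    rewrite Rmult_0_r, exp_0, Rmult_1_r in Hm.
    intro E. rewrite E in Hm. nra. }
  assert (Hpos : forall s, 0 <= s <= t -> X s > 0).
  { intros s Hs. destruct (Rtotal_order (X s) 0) as [Hl|[He|Hg]].
    - exfalso. destruct (Req_dec s 0) as [->|Hs0]; [lra|].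
      destruct (IVT (fun z => - X z) 0 s) as [z [Hz Ez]].
      + intro z. apply continuity_pt_opp. apply HC.
      + lra.
      + lra.
      + lra.
      + apply (Hnz z); lra.
    - exfalso; apply (Hnz s Hs He).
    - exact Hg. }
  split; [apply Hpos; lra|]. split.
  - intro P. specialize (HL P).
    set (m := m_ alpha b uL).
    assert (Hmm : m * (uL*alpha - b) = uL) by (unfold m, m_; field; lra).
    pose proof (one_m alpha b uL Hb P) as Hone. fold m in Hone.
    assert (Hm : (Y 0 - 1 * (m * X 0)) * exp (-b*0) <= (Y t - 1 * (m * X t)) * exp (-b*t)).
    { apply (mono_pts (fun s => (Y s - 1 * (m * X s)) * exp (-b*s))
        (fun s => X s * (u s - m * (u s * alpha - b)) * exp (-b*s)) pts); [lra| |].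
      - intros r Hr. apply (C_mul (fun s => Y s - 1 * (m * X s))); [|apply C_exp].
        apply (C_minus Y (fun s => 1 * (m * X s))); [apply HC|].
        apply (C_cmul (fun s => m * X s)). apply C_cmul. apply HC.
      - intros r Hr Hn. destruct (HDer r ltac:(lra) Hn) as [DX DY]. split.
        + eapply D_eq.
          * apply (D_mulexp (fun s => Y s - 1 * (m * X s))). apply (D_lin Y (fun s => m * X s)).
            exact DY. apply D_cmul. exact DX.
          * ring.
        + apply Rmult_le_pos; [|left; apply exp_pos].
          apply Rmult_le_pos; [left; apply Hpos; lra|].
          destruct (HOm r) as [Q1 Q2].
          assert (Z : (u r - m*(u r*alpha-b)) - (u r - uL)*(1-m*alpha) = uL - m*(uL*alpha-b)) by ring.
          replace (u r - m * (u r * alpha - b)) with ((u r - uL) * (1 - m * alpha)) by lra.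
          apply Rmult_le_pos; lra. }
    rewrite Rmult_0_r, exp_0, Rmult_1_r in Hm.
    fold m in HL. apply (Rmult_le_reg_r (exp (-b*t))); [apply exp_pos| nra].
  - intro P. specialize (HU P).
    set (m := m_ alpha b uU).
    assert (Hmm : m * (uU*alpha - b) = uU) by (unfold m, m_; field; lra).
    pose proof (one_m alpha b uU Hb P) as Hone. fold m in Hone.
    assert (Hm : (m * X 0 - 1 * Y 0) * exp (-b*0) <= (m * X t - 1 * Y t) * exp (-b*t)).
    { apply (mono_pts (fun s => (m * X s - 1 * Y s) * exp (-b*s))
        (fun s => X s * (m * (u s * alpha - b) - u s) * exp (-b*s)) pts); [lra| |].
      - intros r Hr. apply (C_mul (fun s => m * X s - 1 * Y s)); [|apply C_exp].
        apply (C_minus (fun s => m * X s) (fun s => 1 * Y s)); apply C_cmul; apply HC.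
      - intros r Hr Hn. destruct (HDer r ltac:(lra) Hn) as [DX DY]. split.
        + eapply D_eq.
          * apply (D_mulexp (fun s => m * X s - 1 * Y s)). apply (D_lin (fun s => m * X s) Y).
            apply D_cmul. exact DX. exact DY.
          * ring.
        + apply Rmult_le_pos; [|left; apply exp_pos].
          apply Rmult_le_pos; [left; apply Hpos; lra|].
          destruct (HOm r) as [Q1 Q2].
          assert (Z : (m * (u r * alpha - b) - u r) - (uU - u r) * (1 - m * alpha) = m*(uU*alpha-b) - uU) by ring.
          replace (m * (u r * alpha - b) - u r) with ((uU - u r) * (1 - m * alpha)) by lra.
          apply Rmult_le_pos; lra. }
    rewrite Rmult_0_r, exp_0, Rmult_1_r in Hm.
    fold m in HU. apply (Rmult_le_reg_r (exp (-b*t))); [apply exp_pos| nra].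
Qed.

Theorem mainTheorem9 (uL uU alpha b : R)
  (HuL : uL < 0) (HuU : 0 < uU) (Halpha : alpha <> 0) (Hb : b < 0) :
  (* 1 *)
  ((~ exists u, inOmega uL uU u /\ b = alpha * u) ->
     forall x y, Cset uL uU alpha b x y <->
       (inG x y /\ m_ alpha b uL * x <= y /\ y <= m_ alpha b uU * x)) /\
  (* 2 *)
  ((exists u, inOmega uL uU u /\ b = alpha * u) ->
     (alpha > 0 -> forall x y, Cset uL uU alpha b x y <->
        (inG x y /\ y <= m_ alpha b uU * x)) /\
     (alpha < 0 -> forall x y, Cset uL uU alpha b x y <->
        (inG x y /\ y >= m_ alpha b uL * x))) /\
  (* 3 : the time-t0 map of the constant control u sends r_{u1} onto r_{u2} *)
  (forall u1 u2, inIntB uL uU alpha b u1 -> inIntB uL uU alpha b u2 -> u1 <> u2 ->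
     exists t0 u, t0 > 0 /\ inOmega uL uU u /\
       (forall x y X Y, ray alpha b u1 x y ->
          is_solution alpha b (fun _ => u) X Y -> X 0 = x -> Y 0 = y ->
          ray alpha b u2 (X t0) (Y t0)) /\
       (forall x' y', ray alpha b u2 x' y' ->
          exists x y X Y, ray alpha b u1 x y /\
            is_solution alpha b (fun _ => u) X Y /\ X 0 = x /\ Y 0 = y /\
            X t0 = x' /\ Y t0 = y')) /\
  (* 4 : positive invariance of C *)
  (forall u X Y, admissible uL uU u -> is_solution alpha b u X Y ->
     Cset uL uU alpha b (X 0) (Y 0) ->
     forall t, t >= 0 -> Cset uL uU alpha b (X t) (Y t)).
Proof.
  split; [|split; [|split]].
  - intros Hno x y.
    assert (P1 : uL*alpha - b > 0).
    { destruct (Rlt_dec 0 (uL*alpha - b)) as [Q|Q]; [exact Q|].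
      exfalso. apply Hno. assert (Ha : alpha > 0) by nra.
      exists (b/alpha). assert (E : b = alpha * (b/alpha)) by (field; lra).
      split; [|exact E]. split; nra. }
    assert (P2 : uU*alpha - b > 0).
    { destruct (Rlt_dec 0 (uU*alpha - b)) as [Q|Q]; [exact Q|].
      exfalso. apply Hno. assert (Ha : alpha < 0) by nra.
      exists (b/alpha). assert (E : b = alpha * (b/alpha)) by (field; lra).
      split; [|exact E]. split; nra. }
    rewrite char by auto. unfold inG. intuition.
  - intros [u0 [[O1 O2] E]]. split.
    + intros Ha x y. rewrite char by auto. unfold inG.
      assert (P2 : uU*alpha - b > 0) by nra.
      assert (P1 : ~ uL*alpha - b > 0) by nra.
      intuition.
    + intros Ha x y. rewrite char by auto. unfold inG.
      assert (P1 : uL*alpha - b > 0) by nra.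
      assert (P2 : ~ uU*alpha - b > 0) by nra.
      intuition; lra.
  - apply part3. exact Hb.
  - apply part4; auto.
Qed.
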